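(* Let $\mathbb{I}>0$ and, for $\ell>0$, let $g(\ell)=4\ell^2\int_0^\infty u^2\,\Phi\big(-\frac{u\ell\sqrt{\mathbb{I}}}{2}\big)\phi(u)\,du$. Then $g$ is maximized at $\ell_{opt}=\frac{2.426}{\sqrt{\mathbb{I}}}$ (constant given to three decimals), and the corresponding acceptance rate $$\alpha_{opt}=4\int_0^\infty\Phi\Big(-\frac{u\ell_{opt}\sqrt{\mathbb{I}}}{2}\Big)\phi(u)\,du$$ equals $0.439$ up to three decimal places.
   Context: $\Phi$ and $\phi$ are the standard normal cdf and density. In the paper, $g(\ell)$ is the diffusion speed of the limiting Langevin diffusion of the additive TMCMC chain for i.i.d. product targets $\prod_i f(x_i)$, with $\mathbb{I}=E_f[(f'(X)/f(X))^2]$, and $\alpha_{opt}$ is the limiting expected acceptance rate at scaling $\ell_{opt}$. *)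

(* Defs.v *)
From Stdlib Require Import Reals.
From Coquelicot Require Import Coquelicot.
Open Scope R_scope.

Definition phi (u : R) : R := exp (- u ^ 2 / 2) / sqrt (2 * PI).

Definition Phi (x : R) : R := RInt_gen phi (Rbar_locally m_infty) (at_point x).

Definition g (I l : R) : R :=
  4 * l ^ 2 * RInt_gen (fun u => u ^ 2 * Phi (- (u * l * sqrt I) / 2) * phi u)
                       (at_point 0) (Rbar_locally p_infty).

Definition alpha (I l : R) : R :=
  4 * RInt_gen (fun u => Phi (- (u * l * sqrt I) / 2) * phi u)
               (at_point 0) (Rbar_locally p_infty).

(* Main.v *)
Require Import Defs.
From Stdlib Require Import Reals Lra Psatz.
From Coquelicot Require Import Coquelicot.
Open Scope R_scope.

Ltac toR := match goal with |- ?a = ?b => change (@eq R a b) end.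

Lemma exRc (f : R -> R) a b : (forall z, Rmin a b <= z <= Rmax a b -> continuous f z) -> ex_RInt f a b.
Proof. apply (@ex_RInt_continuous R_CompleteNormedModule). Qed.
Lemma dcont (f : R -> R) x l : is_derive f x l -> continuous f x.
Proof. intros H. apply (@ex_derive_continuous R_AbsRing R_NormedModule). exists l; exact H. Qed.
Lemma exdcont (f : R -> R) x : ex_derive f x -> continuous f x.
Proof. intros H. apply (@ex_derive_continuous R_AbsRing R_NormedModule). exact H. Qed.
Lemma FTC (f df : R -> R) a b : (forall x, Rmin a b <= x <= Rmax a b -> is_derive f x (df x)) ->
  (forall x, Rmin a b <= x <= Rmax a b -> continuous df x) -> is_RInt df a b (f b - f a).
Proof. apply (@is_RInt_derive R_CompleteNormedModule). Qed.

Lemma ball_R (x e y : R) : Rabs (y - x) < e -> ball x e y.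
Proof. intros H. exact H. Qed.

Lemma eps_bound (k e : R) : 0 < e -> exists M, 1 <= M /\ forall t, M < t -> Rabs k / t < e.
Proof.
  intros He. exists (Rabs k / e + 1). split.
  - assert (0 <= Rabs k / e) by (apply Rdiv_le_0_compat; [apply Rabs_pos|lra]). lra.
  - intros t Ht. assert (0 <= Rabs k / e) by (apply Rdiv_le_0_compat; [apply Rabs_pos|lra]).
    assert (Ht0 : 0 < t) by lra.
    apply (Rmult_lt_reg_r t); [lra|]. unfold Rdiv. rewrite Rmult_assoc, Rinv_l by lra.
    rewrite Rmult_1_r. assert (Rabs k = Rabs k / e * e) by (field; lra).
    nra.
Qed.

Lemma is_RInt_gen_0_inf (f A : R -> R) (L k : R) :
  (forall b, 0 <= b -> is_RInt f 0 b (A b - A 0)) ->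
  (forall t, 1 <= t -> Rabs (A t - L) <= k / t) ->
  is_RInt_gen f (at_point 0) (Rbar_locally p_infty) (L - A 0).
Proof.
  intros HI HA P [eps Heps].
  destruct (eps_bound k eps (cond_pos eps)) as [M [HM1 HM]].
  apply (Filter_prod _ _ _ (fun a => a = 0) (fun b => M < b)).
  - reflexivity.
  - exists M. auto.
  - intros a b -> Hb. exists (A b - A 0). split.
    + apply HI. lra.
    + apply Heps. apply ball_R.
      replace (A b - A 0 - (L - A 0)) with (A b - L) by ring.
      eapply Rle_lt_trans. apply HA; lra.
      eapply Rle_lt_trans; [|apply (HM b); lra].
      unfold Rdiv. apply Rmult_le_compat_r.
      * left; apply Rinv_0_lt_compat; lra.
      * apply Rle_abs.
Qed.

Lemma is_RInt_gen_minf (f A : R -> R) (L k y : R) :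
  (forall a, a <= y -> is_RInt f a y (A y - A a)) ->
  (forall t, t <= -1 -> Rabs (A t - L) <= k / (- t)) ->
  is_RInt_gen f (Rbar_locally m_infty) (at_point y) (A y - L).
Proof.
  intros HI HA P [eps Heps].
  destruct (eps_bound k eps (cond_pos eps)) as [M [HM1 HM]].
  apply (Filter_prod _ _ _ (fun a => a < Rmin (-M) y) (fun b => b = y)).
  - exists (Rmin (-M) y). auto.
  - reflexivity.
  - intros a b Ha ->. exists (A y - A a). split.
    + apply HI. pose proof (Rmin_r (-M) y). simpl. lra.
    + apply Heps. apply ball_R. simpl.
      pose proof (Rmin_l (-M) y).
      replace (A y - A a - (A y - L)) with (- (A a - L)) by ring.
      rewrite Rabs_Ropp.
      eapply Rle_lt_trans. apply HA; lra.
      eapply Rle_lt_trans; [|apply (HM (-a)); lra].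
      unfold Rdiv. apply Rmult_le_compat_r.
      * left; apply Rinv_0_lt_compat; lra.
      * apply Rle_abs.
Qed.

Lemma sqrt2PI_pos : 0 < sqrt (2 * PI).
Proof. apply sqrt_lt_R0. pose proof PI_RGT_0. lra. Qed.

Lemma phi_der x : is_derive phi x (- x * phi x).
Proof. unfold phi. auto_derive. auto. replace (exp (- x^2/2)) with (exp (- (x*(x*1)) * /2)) by (f_equal; field). field. pose proof sqrt2PI_pos. lra. Qed.

Lemma phi_cont x : continuous phi x.
Proof. apply (@ex_derive_continuous R_AbsRing R_NormedModule). eexists. apply phi_der. Qed.

Lemma phi_pos x : 0 < phi x.
Proof. unfold phi. pose proof sqrt2PI_pos. apply Rdiv_lt_0_compat; auto. apply exp_pos. Qed.

Lemma phi_even x : phi (- x) = phi x.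
Proof. unfold phi. f_equal. f_equal. f_equal. ring. Qed.

Definition S (t : R) : R := RInt phi 0 t.

Lemma ex_RInt_phi a b : ex_RInt phi a b.
Proof. apply exRc. intros; apply phi_cont. Qed.

Lemma S_der t : is_derive S t (phi t).
Proof.
  apply (is_derive_RInt phi S 0).
  - apply filter_forall. intros b. apply (@RInt_correct R_CompleteNormedModule). apply ex_RInt_phi.
  - apply phi_cont.
Qed.

Lemma S_cont t : continuous S t.
Proof. apply (@ex_derive_continuous R_AbsRing R_NormedModule). eexists. apply S_der. Qed.

Lemma S_0 : S 0 = 0.
Proof. unfold S. apply (@RInt_point R_CompleteNormedModule). Qed.

Lemma S_odd t : S (- t) = - S t.
Proof.
  assert (H1 : is_RInt phi (-0) (-t) (S (-t))).
  { rewrite Ropp_0. apply (@RInt_correct R_CompleteNormedModule). apply ex_RInt_phi. }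
  apply (is_RInt_comp_opp (V:=R_NormedModule)) in H1.
  assert (H2 : is_RInt phi 0 t (S t)).
  { apply (@RInt_correct R_CompleteNormedModule). apply ex_RInt_phi. }
  apply (is_RInt_opp (V:=R_NormedModule)) in H2.
  apply (is_RInt_ext (V:=R_NormedModule)) with (g := fun y => - phi y) in H1.
  2:{ intros x _. rewrite phi_even. reflexivity. }
  change (is_RInt (fun y => - phi y) 0 t (- S t)) in H2.
  apply (@is_RInt_unique R_CompleteNormedModule) in H1. apply (@is_RInt_unique R_CompleteNormedModule) in H2.
  rewrite H1 in H2. exact H2.
Qed.

Definition Tk (h x : R) : R := exp (- (h ^ 2 * (1 + x ^ 2)) / 2) / (1 + x ^ 2).
Definition Dk (h x : R) : R := - (h * exp (- (h ^ 2 * (1 + x ^ 2)) / 2)).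
Definition T (h c : R) : R := / (2 * PI) * RInt (Tk h) 0 c.

Lemma Tk_der h x : is_derive (fun u => Tk u x) h (Dk h x).
Proof.
  unfold Tk, Dk. auto_derive.
  - pose proof (pow2_ge_0 x). lra.
  - replace (exp (- (h^2 * (1 + x^2)) / 2)) with (exp (- (h * (h * 1) * (1 + x ^ 2)) * / 2)) by (f_equal; field).
    cbn [pow]. field. pose proof (pow2_ge_0 x). simpl in *. lra.
Qed.


Lemma Dk_cont2 h x : continuity_2d_pt Dk h x.
Proof.
  unfold Dk.
  apply continuity_2d_pt_opp. apply continuity_2d_pt_mult. apply continuity_2d_pt_id1.
  apply (continuity_1d_2d_pt_comp exp (fun u v => - (u ^ 2 * (1 + v ^ 2)) / 2)).
  apply derivable_continuous_pt, derivable_pt_exp.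
  apply (continuity_2d_pt_ext (fun u v => (- 1 / 2) * ((u * u) * (1 + v * v)))).
  { intros; field. }
  apply continuity_2d_pt_mult. apply continuity_2d_pt_const.
  apply continuity_2d_pt_mult. apply continuity_2d_pt_mult; apply continuity_2d_pt_id1.
  apply continuity_2d_pt_plus. apply continuity_2d_pt_const.
  apply continuity_2d_pt_mult; apply continuity_2d_pt_id2.
Qed.

Lemma Tk_cont_x h x : continuous (Tk h) x.
Proof.
  apply exdcont. unfold Tk. auto_derive. pose proof (pow2_ge_0 x). lra.
Qed.

Lemma Dk_cont_x h x : continuous (Dk h) x.
Proof.
  apply exdcont. unfold Dk. auto_derive. auto.
Qed.

Lemma Derive_Tk u v : Derive (fun z => Tk z v) u = Dk u v.
Proof. apply is_derive_unique. apply Tk_der. Qed.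

Lemma T_der_raw h c : is_derive (fun u => RInt (Tk u) 0 c) h (RInt (Dk h) 0 c).
Proof.
  assert (E : RInt (Dk h) 0 c = RInt (fun t => Derive (fun u => Tk u t) h) 0 c).
  { apply RInt_ext. intros; rewrite Derive_Tk; reflexivity. }
  rewrite E.
  apply (is_derive_RInt_param_aux Tk 0 c h).
  - apply filter_forall. intros y t _. eexists. apply Tk_der.
  - intros t _. apply (continuity_2d_pt_ext Dk). intros; rewrite Derive_Tk; reflexivity.
    apply Dk_cont2.
  - apply filter_forall. intros y. apply exRc. intros; apply Tk_cont_x.
  - apply (ex_RInt_ext (Dk h)). intros; rewrite Derive_Tk; reflexivity.
    apply exRc. intros; apply Dk_cont_x.
Qed.

Lemma Sc_der h t : is_derive (fun t => - (exp (- h^2/2) * sqrt (2 * PI)) * S (h * t)) t (Dk h t).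
Proof.
  auto_derive.
  - eexists; apply S_der.
  - change (Derive (fun x => S x)) with (Derive S).
    rewrite (is_derive_unique _ _ _ (S_der (h * t))). unfold Dk, phi.
    replace (exp (- (h^2 * (1 + t^2)) / 2)) with (exp (- (h * (h * 1)) / 2) * exp (- (h * t)^2 / 2))
      by (rewrite <- exp_plus; f_equal; cbn [pow]; field).
    field. pose proof sqrt2PI_pos. lra.
Qed.

Lemma RInt_Dk h c : RInt (Dk h) 0 c = - (exp (- h^2/2) * sqrt (2 * PI)) * S (h * c).
Proof.
  apply (@is_RInt_unique R_CompleteNormedModule).
  pose (F := fun t => - (exp (- h^2/2) * sqrt (2 * PI)) * S (h * t)).
  replace (- (exp (- h^2/2) * sqrt (2 * PI)) * S (h * c)) with (F c - F 0)
    by (unfold F; rewrite Rmult_0_r, S_0; ring).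
  apply (FTC F). intros; apply Sc_der. intros; apply Dk_cont_x.
Qed.

Lemma T_der h c : is_derive (fun u => T u c) h (- phi h * S (h * c)).
Proof.
  unfold T.
  pose proof (is_derive_scal (fun u => RInt (Tk u) 0 c) h (/ (2 * PI)) _ (T_der_raw h c)) as H.
  replace (- phi h * S (h * c)) with (/ (2 * PI) * RInt (Dk h) 0 c). exact H.
  rewrite RInt_Dk. unfold phi.
  pose proof sqrt2PI_pos. pose proof PI_RGT_0.
  replace (2 * PI) with (sqrt (2 * PI) * sqrt (2 * PI)) at 1 by (apply sqrt_sqrt; lra).
  field. lra.
Qed.


Lemma T_0 c : T 0 c = atan c / (2 * PI).
Proof.
  unfold T.
  assert (H : is_RInt (Tk 0) 0 c (atan c - atan 0)).
  { apply (is_RInt_ext (V:=R_NormedModule)) with (f := fun x => / (1 + x ^ 2)).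
    - intros x _. unfold Tk. replace (- (0 ^ 2 * (1 + x ^ 2)) / 2) with 0 by field. rewrite exp_0. change (@eq R (/ (1 + x^2)) (1 / (1+x^2))). field.
      pose proof (pow2_ge_0 x). lra.
    - apply (FTC atan). intros x _. apply is_derive_Reals, derivable_pt_lim_atan.
      intros x _. apply exdcont. auto_derive. pose proof (pow2_ge_0 x). lra. }
  apply (@is_RInt_unique R_CompleteNormedModule) in H. rewrite H, atan_0. field.
  pose proof PI_RGT_0; lra.
Qed.

Lemma exp_le a b : a <= b -> exp a <= exp b.
Proof. intros [H|H]. left; apply exp_increasing; auto. subst; lra. Qed.

Lemma T_bounds t c : 0 <= c -> 0 <= T t c <= c * exp (- t^2 / 2) / (2 * PI).
Proof.
  intros Hc. unfold T. pose proof PI_RGT_0.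
  assert (I1 : 0 <= RInt (Tk t) 0 c).
  { assert (E0 : RInt (fun _ : R => 0) 0 c = 0).
    { rewrite (@RInt_const R_CompleteNormedModule). simpl. unfold scal; simpl. unfold mult; simpl. ring. }
    rewrite <- E0 at 1.
    apply RInt_le; auto. apply exRc; intros; apply exdcont; auto_derive; auto.
    apply exRc; intros; apply Tk_cont_x.
    intros x _. unfold Tk. apply Rdiv_le_0_compat. left; apply exp_pos. pose proof (pow2_ge_0 x). lra. }
  assert (I2 : RInt (Tk t) 0 c <= c * exp (- t^2/2)).
  { replace (c * exp (- t^2/2)) with (RInt (fun _ => exp (- t^2/2)) 0 c).
    apply RInt_le; auto. apply exRc; intros; apply Tk_cont_x.
    apply exRc; intros; apply exdcont; auto_derive; auto.
    intros x _. unfold Tk. pose proof (pow2_ge_0 x). pose proof (pow2_ge_0 t).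
    apply (Rle_trans _ (exp (- (t ^ 2 * (1 + x ^ 2)) / 2))).
    { unfold Rdiv. rewrite <- (Rmult_1_r (exp _)) at 2. apply Rmult_le_compat_l. left; apply exp_pos.
      rewrite <- Rinv_1. apply Rinv_le_contravar; lra. }
    apply exp_le. nra.
    rewrite (@RInt_const R_CompleteNormedModule). simpl. unfold scal; simpl. unfold mult; simpl. ring. }
  split.
  - apply Rmult_le_pos; auto. left; apply Rinv_0_lt_compat; lra.
  - unfold Rdiv. rewrite Rmult_comm. apply Rmult_le_compat_r. left; apply Rinv_0_lt_compat; lra. auto.
Qed.

Lemma W_der t : is_derive (fun t => S t ^ 2 + 2 * T t 1) t 0.
Proof.
  auto_derive.
  - split. eexists; apply S_der. split; auto. eexists; apply T_der.
  - replace (Derive (fun x : R => S x) t) with (phi t) by (symmetry; apply is_derive_unique; apply S_der).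
    replace (Derive (fun x : R => T x 1) t) with (- phi t * S (t * 1)) by (symmetry; apply is_derive_unique; apply T_der).
    toR. rewrite !Rmult_1_r. ring.
Qed.

Lemma const_by_deriv (W : R -> R) : (forall t, is_derive W t 0) -> forall t, W t = W 0.
Proof.
  intros HW t.
  assert (H : is_RInt (fun _ => 0) 0 t (W t - W 0)).
  { apply (FTC W). intros; apply HW. intros; apply exdcont; auto_derive; auto. }
  apply (@is_RInt_unique R_CompleteNormedModule) in H.
  rewrite (@RInt_const R_CompleteNormedModule) in H. revert H. unfold scal; simpl. unfold mult; simpl.
  intros H. lra.
Qed.

Lemma gauss_id t : S t ^ 2 + 2 * T t 1 = 1 / 4.
Proof.
  rewrite (const_by_deriv (fun t => S t ^ 2 + 2 * T t 1) W_der t).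
  rewrite S_0, T_0, atan_1. field. pose proof PI_RGT_0; lra.
Qed.

Lemma S_nonneg t : 0 <= t -> 0 <= S t.
Proof.
  intros Ht. unfold S.
  assert (E0 : RInt (fun _ : R => 0) 0 t = 0).
  { rewrite (@RInt_const R_CompleteNormedModule). simpl. unfold scal; simpl. unfold mult; simpl. ring. }
  rewrite <- E0 at 1. apply RInt_le; auto.
  apply exRc; intros; apply exdcont; auto_derive; auto. apply ex_RInt_phi.
  intros; left; apply phi_pos.
Qed.

Lemma S_bound t : 0 <= t -> 0 <= S t <= 1/2 /\ 1/2 - S t <= 4 * T t 1.
Proof.
  intros Ht. pose proof (S_nonneg t Ht). pose proof (gauss_id t).
  pose proof (T_bounds t 1 ltac:(lra)) as [T0 _].
  assert (S t <= 1/2) by nra.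
  split. lra.
  nra.
Qed.


Lemma exp_decay u : 0 < u -> exp (- u ^ 2 / 2) <= 1 / u /\ u * exp (- u ^ 2 / 2) <= 2 / u.
Proof.
  intros Hu. pose proof (exp_ineq1_le (u ^ 2 / 2)).
  assert (E : exp (- u ^ 2 / 2) = / exp (u ^ 2 / 2)).
  { rewrite <- exp_Ropp. f_equal. field. }
  rewrite E. pose proof (exp_pos (u^2/2)).
  split.
  - unfold Rdiv. rewrite Rmult_1_l. apply Rinv_le_contravar. auto. nra.
  - apply (Rmult_le_reg_r (exp (u ^ 2 / 2) * u)). nra.
    replace (u * / exp (u ^ 2 / 2) * (exp (u ^ 2 / 2) * u)) with (u * u) by (field; lra).
    replace (2 / u * (exp (u ^ 2 / 2) * u)) with (2 * exp (u ^ 2 / 2)) by (field; lra).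
    nra.
Qed.

Lemma T_small t c : 0 <= c -> 0 < t -> 0 <= T t c <= c / (2 * PI * t).
Proof.
  intros Hc Ht. pose proof (T_bounds t c Hc) as [H1 H2]. pose proof (exp_decay t Ht) as [E1 _].
  pose proof PI_RGT_0. split; auto.
  eapply Rle_trans; [exact H2|].
  replace (c / (2 * PI * t)) with (c * (1 / t) / (2 * PI)) by (field; lra).
  unfold Rdiv. apply Rmult_le_compat_r. left; apply Rinv_0_lt_compat; lra.
  apply Rmult_le_compat_l; auto.
Qed.

Lemma Phi_val y : Phi y = 1 / 2 + S y.
Proof.
  unfold Phi.
  replace (1 / 2 + S y) with (S y - (- (1/2))) by ring.
  apply is_RInt_gen_unique.
  apply (is_RInt_gen_minf phi S (- (1/2)) 1 y).
  - intros a _. apply (FTC S). intros; apply S_der. intros; apply phi_cont.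
  - intros t Ht. rewrite <- (Ropp_involutive t). rewrite S_odd.
    pose proof (S_bound (- t) ltac:(lra)) as [[B1 B2] B3].
    pose proof (T_small (- t) 1 ltac:(lra) ltac:(lra)) as [T1 T2].
    pose proof PI_RGT_0. pose proof PI2_3_2.
    rewrite Rabs_pos_eq by lra.
    assert (4 * (1 / (2 * PI * - t)) <= 1 / - t).
    { replace (4 * (1 / (2 * PI * - t))) with ((2 / PI) * (1 / - t)) by (field; lra).
      rewrite <- (Rmult_1_l (1 / - t)) at 2. apply Rmult_le_compat_r.
      unfold Rdiv; rewrite Rmult_1_l; left; apply Rinv_0_lt_compat; lra.
      apply (Rmult_le_reg_r PI); auto. unfold Rdiv; rewrite Rmult_assoc, Rinv_l; lra. }
    rewrite Ropp_involutive. lra.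
Qed.

Definition A1 (c u : R) : R := S u / 2 + T u c.

Lemma A1_der c u : is_derive (A1 c) u ((1/2 - S (c * u)) * phi u).
Proof.
  unfold A1. auto_derive.
  - split. eexists; apply S_der. split; auto. eexists; apply T_der.
  - replace (Derive (fun x : R => S x) u) with (phi u) by (symmetry; apply is_derive_unique; apply S_der).
    replace (Derive (fun x : R => T x c) u) with (- phi u * S (u * c)) by (symmetry; apply is_derive_unique; apply T_der).
    toR. rewrite (Rmult_comm u c). field.
Qed.

Lemma integ1_cont c u : continuous (fun u => (1/2 - S (c * u)) * phi u) u.
Proof.
  apply exdcont. auto_derive. split. eexists; apply S_der. split; auto. eexists; apply phi_der.
Qed.

Lemma A1_lim c t : 0 <= c -> 1 <= t -> Rabs (A1 c t - 1/4) <= (2 + c) / t.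
Proof.
  intros Hc Ht. unfold A1.
  pose proof (S_bound t ltac:(lra)) as [[B1 B2] B3].
  pose proof (T_small t 1 ltac:(lra) ltac:(lra)) as [T1 T2].
  pose proof (T_small t c Hc ltac:(lra)) as [T3 T4].
  pose proof PI_RGT_0. pose proof PI2_3_2.
  assert (E1 : 1 / (2 * PI * t) <= 1 / t).
  { unfold Rdiv; rewrite !Rmult_1_l. apply Rinv_le_contravar; nra. }
  assert (E2 : c / (2 * PI * t) <= c / t).
  { unfold Rdiv. apply Rmult_le_compat_l; auto. apply Rinv_le_contravar; nra. }
  assert (E3 : (2 + c) / t = 2 * (1 / t) + c / t) by (field; lra).
  rewrite E3. apply Rabs_le. split; lra.
Qed.

Lemma integ1 c : 0 < c ->
  is_RInt_gen (fun u => (1/2 - S (c * u)) * phi u) (at_point 0) (Rbar_locally p_infty)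
    (1/4 - atan c / (2 * PI)).
Proof.
  intros Hc.
  replace (1/4 - atan c / (2 * PI)) with (1/4 - A1 c 0)
    by (unfold A1; rewrite S_0, T_0; field; pose proof PI_RGT_0; lra).
  apply (is_RInt_gen_0_inf _ (A1 c) (1/4) (2 + c)).
  - intros b _. apply (FTC (A1 c)). intros; apply A1_der. intros; apply integ1_cont.
  - intros t Ht. apply A1_lim; lra.
Qed.

Definition A2 (c u : R) : R :=
  A1 c u - u * (1/2 - S (c * u)) * phi u + c * exp (- ((1 + c^2) * u^2) / 2) / (2 * PI * (1 + c^2)).

Lemma A2_der c u : is_derive (A2 c) u (u ^ 2 * (1/2 - S (c * u)) * phi u).
Proof.
  unfold A2. auto_derive.
  - split; [eexists; apply A1_der|split; [eexists; apply S_der| split; [eexists; apply phi_der| exact I]]].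
  - replace (Derive (fun x : R => A1 c x) u) with ((1/2 - S (c * u)) * phi u) by (symmetry; apply is_derive_unique; apply A1_der).
    replace (Derive (fun x : R => S x) (c * u)) with (phi (c * u)) by (symmetry; apply is_derive_unique; apply S_der).
    replace (Derive (fun x : R => phi x) u) with (- u * phi u) by (symmetry; apply is_derive_unique; apply phi_der).
    unfold phi.
    assert (EE: exp (- ((1 + c * (c * 1)) * (u * (u * 1))) * / 2) = exp (-(c*u)^2/2) * exp(-u^2/2))
      by (rewrite <- exp_plus; f_equal; cbn [pow]; field).
    rewrite EE. pose proof sqrt2PI_pos. pose proof (pow2_ge_0 c).
    set (s := sqrt (2 * PI)).
    assert (Q : 2 * PI = s * s) by (unfold s; rewrite sqrt_sqrt; pose proof PI_RGT_0; lra).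
    rewrite Q. toR. field. split. fold s in H; lra. simpl in H0; nra.
Qed.

Lemma A2_lim c t : 0 <= c -> 1 <= t -> Rabs (A2 c t - 1/4) <= (3 + 2 * c) / t.
Proof.
  intros Hc Ht. pose proof (A1_lim c t Hc Ht) as HA1.
  unfold A2.
  pose proof (S_bound (c * t) ltac:(nra)) as [[B1 B2] _].
  pose proof (exp_decay t ltac:(lra)) as [E1 E2].
  pose proof PI_RGT_0. pose proof PI2_3_2. pose proof sqrt2PI_pos.
  assert (Hs : 1 <= sqrt (2 * PI)).
  { rewrite <- sqrt_1. apply sqrt_le_1_alt. lra. }
  assert (P1 : 0 <= phi t <= exp (- t ^ 2 / 2)).
  { split. left; apply phi_pos. unfold phi. unfold Rdiv at 1.
    rewrite <- (Rmult_1_r (exp (- t^2/2))) at 2. apply Rmult_le_compat_l. left; apply exp_pos.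
    rewrite <- Rinv_1. apply Rinv_le_contravar; lra. }
  assert (M : 0 <= t * (1/2 - S (c * t)) * phi t <= 1 / t).
  { split. apply Rmult_le_pos; [apply Rmult_le_pos|]; lra.
    apply (Rle_trans _ (1/2 * (t * exp (- t ^ 2 / 2)))).
    replace (t * (1/2 - S (c * t)) * phi t) with ((1/2 - S (c * t)) * (t * phi t)) by ring.
    apply Rmult_le_compat; try lra. apply Rmult_le_pos; lra. apply Rmult_le_compat_l; lra.
    replace (1 / t) with (1/2 * (2 / t)) by (field; lra). apply Rmult_le_compat_l; lra. }
  assert (X : 0 <= c * exp (- ((1 + c^2) * t^2) / 2) / (2 * PI * (1 + c^2)) <= c / t).
  { pose proof (pow2_ge_0 c). pose proof (pow2_ge_0 t).
    assert (exp (- ((1 + c^2) * t^2) / 2) <= exp (- t ^ 2 / 2)) by (apply exp_le; nra).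
    pose proof (exp_pos (- ((1 + c^2) * t^2) / 2)).
    split. apply Rdiv_le_0_compat. nra. nra.
    unfold Rdiv. rewrite Rmult_assoc. apply Rmult_le_compat_l; auto.
    assert (K1 : / (2*PI*(1+c^2)) <= 1) by (rewrite <- Rinv_1; apply Rinv_le_contravar; nra).
    pose proof (Rmult_le_compat_l (exp (- ((1 + c^2) * t^2) / 2)) _ _ ltac:(lra) K1).
    unfold Rdiv in E1. lra. }
  assert (Z : (3 + 2 * c) / t = (2 + c) / t + 1 / t + c / t) by (field; lra).
  rewrite Z. apply Rabs_le. apply Rabs_le_between in HA1. lra.
Qed.

Lemma integ2_cont c u : continuous (fun u => u ^ 2 * (1/2 - S (c * u)) * phi u) u.
Proof.
  apply exdcont. auto_derive. split. eexists; apply S_der. split; auto. eexists; apply phi_der.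
Qed.

Lemma integ2 c : 0 < c ->
  is_RInt_gen (fun u => u ^ 2 * (1/2 - S (c * u)) * phi u) (at_point 0) (Rbar_locally p_infty)
    (1/4 - atan c / (2 * PI) - c / (2 * PI * (1 + c ^ 2))).
Proof.
  intros Hc.
  replace (1/4 - atan c / (2 * PI) - c / (2 * PI * (1 + c ^ 2))) with (1/4 - A2 c 0).
  2:{ unfold A2, A1. rewrite Rmult_0_r, S_0, T_0. replace (- ((1 + c^2) * 0^2) / 2) with 0 by field.
      rewrite exp_0. field. pose proof PI_RGT_0. pose proof (pow2_ge_0 c). lra. }
  apply (is_RInt_gen_0_inf _ (A2 c) (1/4) (3 + 2 * c)).
  - intros b _. apply (FTC (A2 c)). intros; apply A2_der. intros; apply integ2_cont.
  - intros t Ht. apply A2_lim; lra.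
Qed.

Lemma Phi_neg c u : Phi (- (u * (2 * c)) / 2) = 1/2 - S (c * u).
Proof.
  rewrite Phi_val. replace (- (u * (2 * c)) / 2) with (- (c * u)) by field. rewrite S_odd. ring.
Qed.

Lemma g_val I l : 0 < I -> 0 < l ->
  g I l = 4 * l ^ 2 * (1/4 - atan (l * sqrt I / 2) / (2 * PI) - (l * sqrt I / 2) / (2 * PI * (1 + (l * sqrt I / 2) ^ 2))).
Proof.
  intros HI Hl. set (c := l * sqrt I / 2).
  assert (Hc : 0 < c) by (unfold c; pose proof (sqrt_lt_R0 I HI); nra).
  unfold g.
  assert (E : (fun u => u ^ 2 * Phi (- (u * l * sqrt I) / 2) * phi u) = (fun u => u ^ 2 * (1/2 - S (c * u)) * phi u)).
  { apply FunctionalExtensionality.functional_extensionality. intros u.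
    rewrite <- (Phi_neg c u). do 3 f_equal. unfold c. field. }
  rewrite E. rewrite (is_RInt_gen_unique _ _ (integ2 c Hc)). reflexivity.
Qed.

Lemma alpha_val I l : 0 < I -> 0 < l ->
  alpha I l = 1 - 2 * atan (l * sqrt I / 2) / PI.
Proof.
  intros HI Hl. set (c := l * sqrt I / 2).
  assert (Hc : 0 < c) by (unfold c; pose proof (sqrt_lt_R0 I HI); nra).
  unfold alpha.
  assert (E : (fun u => Phi (- (u * l * sqrt I) / 2) * phi u) = (fun u => (1/2 - S (c * u)) * phi u)).
  { apply FunctionalExtensionality.functional_extensionality. intros u.
    rewrite <- (Phi_neg c u). do 2 f_equal. unfold c. field. }
  rewrite E. rewrite (is_RInt_gen_unique _ _ (integ1 c Hc)). field. pose proof PI_RGT_0. lra.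
Qed.

Definition P9 (x : R) := x - x^3/3 + x^5/5 - x^7/7 + x^9/9 - x^11/11 + x^13/13 - x^15/15 + x^17/17 - x^19/19.
Definition P8 (x : R) := x - x^3/3 + x^5/5 - x^7/7 + x^9/9 - x^11/11 + x^13/13 - x^15/15 + x^17/17.

Lemma atan_der x : is_derive atan x (/ (1 + x ^ 2)).
Proof. apply is_derive_Reals, derivable_pt_lim_atan. Qed.

Lemma e9_der x : is_derive (fun x => atan x - P9 x) x (x ^ 20 / (1 + x ^ 2)).
Proof.
  unfold P9. auto_derive.
  exact I. toR. field. pose proof (pow2_ge_0 x); simpl in *; lra.
Qed.

Lemma e8_der x : is_derive (fun x => atan x - P8 x) x (- (x ^ 18 / (1 + x ^ 2))).
Proof.
  unfold P8. auto_derive.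
  exact I. toR. field. pose proof (pow2_ge_0 x); simpl in *; lra.
Qed.

Lemma atan_bounds x : 0 <= x -> P9 x <= atan x <= P8 x.
Proof.
  intros [Hx|Hx].
  2:{ subst. unfold P9, P8. rewrite atan_0. lra. }
  split.
  - destruct (MVT_cor2 (fun x => atan x - P9 x) (fun x => x ^ 20 / (1 + x ^ 2)) 0 x Hx) as [z [Hz1 Hz2]].
    { intros; apply is_derive_Reals, e9_der. }
    revert Hz1. unfold P9. rewrite atan_0.
    assert (0 <= z ^ 20 / (1 + z ^ 2)).
    { apply Rdiv_le_0_compat. replace 20%nat with (2 * 10)%nat by reflexivity. rewrite pow_mult. apply pow_le, pow2_ge_0.
      pose proof (pow2_ge_0 z); lra. }
    intros. nra.
  - destruct (MVT_cor2 (fun x => atan x - P8 x) (fun x => - (x ^ 18 / (1 + x ^ 2))) 0 x Hx) as [z [Hz1 Hz2]].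
    { intros; apply is_derive_Reals, e8_der. }
    revert Hz1. unfold P8. rewrite atan_0.
    assert (0 <= z ^ 18 / (1 + z ^ 2)).
    { apply Rdiv_le_0_compat. replace 18%nat with (2 * 9)%nat by reflexivity. rewrite pow_mult. apply pow_le, pow2_ge_0.
      pose proof (pow2_ge_0 z); lra. }
    intros. nra.
Qed.

Lemma atan_shift c : 0 < c -> atan c = PI / 4 + atan ((c - 1) / (c + 1)).
Proof.
  intros Hc. rewrite <- atan_1.
  pose proof (atan_bound c). pose proof (atan_bound ((c - 1) / (c + 1))).
  assert (0 < atan c). { rewrite <- atan_0. apply atan_increasing; auto. }
  pose proof PI_RGT_0.
  replace ((c - 1) / (c + 1)) with (atan_sub c 1) by (unfold atan_sub; field; lra).
  apply atan_sub_correct.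
  - lra.
  - rewrite atan_1. lra.
  - apply atan_bound.
Qed.

Lemma pi4_bounds : 2 * P9 (1/3) + P9 (1/7) <= PI / 4 <= 2 * P8 (1/3) + P8 (1/7).
Proof.
  rewrite Machin_2_3_7.
  pose proof (atan_bounds (/3) ltac:(lra)). pose proof (atan_bounds (/7) ltac:(lra)).
  replace (/3) with (1/3) in * by field. replace (/7) with (1/7) in * by field.
  lra.
Qed.

Definition D (c : R) := PI / 2 - atan c - c / (1 + c ^ 2) - c / (1 + c ^ 2) ^ 2.
Definition q (c : R) := c ^ 2 * (PI / 2 - atan c - c / (1 + c ^ 2)).

Lemma D_alt c : 0 < c -> D c = PI / 4 - atan ((c - 1) / (c + 1)) - c / (1 + c ^ 2) - c / (1 + c ^ 2) ^ 2.
Proof. intros Hc. unfold D. rewrite (atan_shift c Hc). field. pose proof (pow2_ge_0 c). lra. Qed.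

Definition c1 := 12130 / 10000.
Definition c2 := 121324 / 100000.

Lemma D_c1 : 0 < D c1.
Proof.
  rewrite D_alt by (unfold c1; lra).
  pose proof pi4_bounds as [Hl _].
  pose proof (atan_bounds ((c1 - 1) / (c1 + 1)) ltac:(unfold c1; lra)) as [_ Hu].
  revert Hl Hu. unfold P9, P8, c1. intros. lra.
Qed.

Lemma D_c2 : D c2 < 0.
Proof.
  rewrite D_alt by (unfold c2; lra).
  pose proof pi4_bounds as [_ Hu].
  pose proof (atan_bounds ((c2 - 1) / (c2 + 1)) ltac:(unfold c2; lra)) as [Hl _].
  revert Hl Hu. unfold P9, P8, c2. intros. lra.
Qed.

Definition P2 (x : R) := x - x^3/3 + x^5/5.

Lemma e2_der x : is_derive (fun x => atan x - P2 x) x (- (x ^ 6 / (1 + x ^ 2))).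
Proof.
  unfold P2. auto_derive. exact I. toR. field. pose proof (pow2_ge_0 x); simpl in *; lra.
Qed.

Lemma atan_P2 x : 0 < x -> atan x <= P2 x.
Proof.
  intros Hx.
  destruct (MVT_cor2 (fun x => atan x - P2 x) (fun x => - (x ^ 6 / (1 + x ^ 2))) 0 x Hx) as [z [Hz1 Hz2]].
  { intros; apply is_derive_Reals, e2_der. }
  revert Hz1. unfold P2. rewrite atan_0.
  assert (0 <= z ^ 6 / (1 + z ^ 2)).
  { apply Rdiv_le_0_compat. replace 6%nat with (2 * 3)%nat by reflexivity. rewrite pow_mult. apply pow_le, pow2_ge_0.
    pose proof (pow2_ge_0 z); lra. }
  intros. nra.
Qed.

Lemma D_der c : is_derive D c ((c ^ 2 - 3) / (1 + c ^ 2) ^ 3).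
Proof.
  unfold D. auto_derive.
  - pose proof (pow2_ge_0 c). simpl in *. repeat split; try exact I; nra.
  - toR. field. pose proof (pow2_ge_0 c). simpl in *. nra.
Qed.

Lemma q_der c : is_derive q c (2 * c * D c).
Proof.
  unfold q, D. auto_derive.
  - pose proof (pow2_ge_0 c). simpl in *. repeat split; try exact I; nra.
  - toR. field. pose proof (pow2_ge_0 c). simpl in *. nra.
Qed.

Lemma D_cont : continuity D.
Proof.
  intros x. apply derivable_continuous_pt. exists ((x ^ 2 - 3) / (1 + x ^ 2) ^ 3).
  apply is_derive_Reals, D_der.
Qed.

Lemma D_decr a b : 0 <= a < b -> b ^ 2 <= 3 -> D b < D a.
Proof.
  intros Hab Hb.
  destruct (MVT_cor2 D (fun c => (c ^ 2 - 3) / (1 + c ^ 2) ^ 3) a b ltac:(lra)) as [z [Hz1 Hz2]].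
  { intros; apply is_derive_Reals, D_der. }
  assert ((z ^ 2 - 3) / (1 + z ^ 2) ^ 3 < 0).
  { apply (Rmult_lt_reg_r ((1 + z ^ 2) ^ 3)). apply pow_lt. pose proof (pow2_ge_0 z); lra.
    unfold Rdiv. rewrite Rmult_assoc, Rinv_l, Rmult_0_l. nra.
    apply pow_nonzero. pose proof (pow2_ge_0 z); lra. }
  nra.
Qed.

Lemma D_neg_big c : 0 < c -> 3 <= c ^ 2 -> D c < 0.
Proof.
  intros Hc H3.
  set (x := / c).
  assert (Hx : 0 < x) by (unfold x; apply Rinv_0_lt_compat; auto).
  assert (Hxc : x * c = 1) by (unfold x; field; lra).
  assert (E : D c = atan x - x / (1 + x ^ 2) - x ^ 3 / (1 + x ^ 2) ^ 2).
  { unfold D. unfold x. rewrite atan_inv by auto. field. pose proof (pow2_ge_0 c). lra. }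
  rewrite E. pose proof (atan_P2 x Hx).
  assert (Hy : x ^ 2 <= 1 / 3).
  { replace (x ^ 2) with (/ (c ^ 2)) by (unfold x; field; lra).
    unfold Rdiv. rewrite Rmult_1_l. apply Rinv_le_contravar; lra. }
  assert (K : (P2 x - x / (1 + x ^ 2) - x ^ 3 / (1 + x ^ 2) ^ 2) * (1 + x ^ 2) ^ 2 =
              x * x ^ 2 * (- 1 / 3 + 8 * x ^ 2 / 15 + x ^ 4 / 15 + x ^ 6 / 5)).
  { unfold P2. field. pose proof (pow2_ge_0 x). lra. }
  assert (Pn : - 1 / 3 + 8 * x ^ 2 / 15 + x ^ 4 / 15 + x ^ 6 / 5 < 0).
  { pose proof (pow2_ge_0 x).
    replace (x ^ 4) with (x ^ 2 * x ^ 2) by ring. replace (x ^ 6) with (x ^ 2 * x ^ 2 * x ^ 2) by ring.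
    nra. }
  assert (0 < x * x ^ 2) by (apply Rmult_lt_0_compat; auto; apply pow_lt; auto).
  assert (0 < (1 + x ^ 2) ^ 2) by (apply pow_lt; pose proof (pow2_ge_0 x); lra).
  assert (P2 x - x / (1 + x ^ 2) - x ^ 3 / (1 + x ^ 2) ^ 2 < 0) by nra.
  lra.
Qed.

Lemma cstar_ex : { cs : R | c1 <= cs <= c2 /\ D cs = 0 }.
Proof.
  destruct (IVT (fun c => - D c) c1 c2) as [z [Hz1 Hz2]].
  - intros x. apply continuity_pt_opp. apply D_cont.
  - unfold c1, c2; lra.
  - pose proof D_c1; lra.
  - pose proof D_c2; lra.
  - exists z. split; auto. lra.
Qed.

Lemma D_pos cs (Hcs : c1 <= cs <= c2) (HD : D cs = 0) c : 0 < c < cs -> 0 < D c.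
Proof.
  intros Hc. rewrite <- HD. apply D_decr. lra.
  unfold c1, c2 in Hcs. simpl. nra.
Qed.

Lemma D_neg cs (Hcs : c1 <= cs <= c2) (HD : D cs = 0) c : cs < c -> D c < 0.
Proof.
  intros Hc. destruct (Rle_lt_dec (c ^ 2) 3).
  - rewrite <- HD. apply D_decr; auto. unfold c1 in Hcs. lra.
  - apply D_neg_big. unfold c1 in Hcs. lra. lra.
Qed.

Lemma q_max cs (Hcs : c1 <= cs <= c2) (HD : D cs = 0) c : 0 < c -> c <> cs -> q c < q cs.
Proof.
  intros Hc Hne. destruct (Rlt_le_dec c cs) as [Hl|Hl].
  - destruct (MVT_cor2 q (fun c => 2 * c * D c) c cs Hl) as [z [Hz1 Hz2]].
    { intros; apply is_derive_Reals, q_der. }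
    pose proof (D_pos cs Hcs HD z ltac:(lra)).
    assert (0 < 2 * z * D z * (cs - c)) by (repeat apply Rmult_lt_0_compat; lra). lra.
  - assert (Hl' : cs < c) by lra.
    destruct (MVT_cor2 q (fun c => 2 * c * D c) cs c Hl') as [z [Hz1 Hz2]].
    { intros; apply is_derive_Reals, q_der. }
    pose proof (D_neg cs Hcs HD z ltac:(lra)). unfold c1 in Hcs.
    assert (0 < 2 * z * (- D z) * (c - cs)) by (repeat apply Rmult_lt_0_compat; lra). lra.
Qed.

Lemma atan_le x y : x <= y -> atan x <= atan y.
Proof. intros [H|H]. left; apply atan_increasing; auto. subst; lra. Qed.

Lemma alpha_num cs (Hcs : c1 <= cs <= c2) :
  Rabs (1 - 2 * atan cs / PI - 439 / 1000) < 5 / 10000.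
Proof.
  assert (Hc : 0 < cs) by (unfold c1 in Hcs; lra).
  rewrite (atan_shift cs Hc).
  set (t := (cs - 1) / (cs + 1)).
  assert (Ht1 : (c1 - 1) / (c1 + 1) <= t).
  { unfold t. apply (Rmult_le_reg_r ((c1 + 1) * (cs + 1))). unfold c1 in *; nra.
    replace ((c1 - 1) / (c1 + 1) * ((c1 + 1) * (cs + 1))) with ((c1 - 1) * (cs + 1)) by (field; unfold c1; lra).
    replace ((cs - 1) / (cs + 1) * ((c1 + 1) * (cs + 1))) with ((cs - 1) * (c1 + 1)) by (field; lra).
    nra. }
  assert (Ht2 : t <= (c2 - 1) / (c2 + 1)).
  { unfold t. apply (Rmult_le_reg_r ((c2 + 1) * (cs + 1))). unfold c1, c2 in *; nra.
    replace ((c2 - 1) / (c2 + 1) * ((c2 + 1) * (cs + 1))) with ((c2 - 1) * (cs + 1)) by (field; unfold c2; lra).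
    replace ((cs - 1) / (cs + 1) * ((c2 + 1) * (cs + 1))) with ((cs - 1) * (c2 + 1)) by (field; lra).
    nra. }
  pose proof (atan_le _ _ Ht1). pose proof (atan_le _ _ Ht2).
  pose proof (atan_bounds ((c1 - 1) / (c1 + 1)) ltac:(unfold c1; lra)) as [L1 _].
  pose proof (atan_bounds ((c2 - 1) / (c2 + 1)) ltac:(unfold c2; lra)) as [_ U2].
  pose proof pi4_bounds as [PL PU].
  revert L1 U2 PL PU. unfold P9, P8. unfold c1, c2 in *. intros.
  set (a := atan t) in *.
  pose proof PI_RGT_0.
  set (X := 2 * a / PI).
  assert (HX : X * PI = 2 * a) by (unfold X; field; lra).
  replace (1 - 2 * (PI / 4 + a) / PI - 439 / 1000) with (61 / 1000 - X) by (unfold X; field; lra).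
  assert (A1 : 959 / 10000 <= a) by lra. assert (A2 : a <= 961 / 10000) by lra.
  assert (P1 : 314 / 100 <= PI) by lra. assert (P2' : PI <= 315 / 100) by lra.
  clear - A1 A2 P1 P2' HX.
  apply Rabs_def1; nra.
Qed.


Lemma g_q I l : 0 < I -> 0 < l -> g I l = 8 / (PI * I) * q (l * sqrt I / 2).
Proof.
  intros HI Hl. rewrite g_val by auto. unfold q.
  pose proof PI_RGT_0. pose proof (sqrt_lt_R0 I HI).
  assert (Q : sqrt I * sqrt I = I) by (apply sqrt_sqrt; lra).
  set (s := sqrt I) in *. pose proof (pow2_ge_0 (l * s / 2)).
  rewrite <- Q. field. repeat split; lra.
Qed.

Theorem corollary1 (I : R) (HI : 0 < I) :
  exists lopt : R,
    0 < lopt /\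
    (forall l : R, 0 < l -> g I l <= g I lopt) /\
    (forall l : R, 0 < l -> (forall l' : R, 0 < l' -> g I l' <= g I l) -> l = lopt) /\
    Rabs (lopt * sqrt I - 2426 / 1000) < 5 / 10000 /\
    Rabs (alpha I lopt - 439 / 1000) < 5 / 10000.
Proof.
  destruct cstar_ex as [cs [Hcs HD]].
  assert (Hc : 0 < cs) by (unfold c1 in Hcs; lra).
  pose proof (sqrt_lt_R0 I HI) as HsI.
  pose proof PI_RGT_0.
  assert (K : 0 < 8 / (PI * I)) by (apply Rdiv_lt_0_compat; nra).
  exists (2 * cs / sqrt I).
  assert (Hl0 : 0 < 2 * cs / sqrt I) by (apply Rdiv_lt_0_compat; lra).
  assert (Ec : 2 * cs / sqrt I * sqrt I / 2 = cs) by (field; lra).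
  assert (qle : forall c, 0 < c -> q c <= q cs).
  { intros c Hc'. destruct (Req_dec c cs) as [->|Hne]. lra. left; apply (q_max cs Hcs HD c Hc' Hne). }
  split; [auto|]. split; [|split; [|split]].
  - intros l Hl. rewrite !g_q by auto. rewrite Ec.
    apply Rmult_le_compat_l. lra. apply qle. apply Rmult_lt_0_compat; [nra|lra].
  - intros l Hl Hmax. specialize (Hmax _ Hl0). rewrite !g_q in Hmax by auto. rewrite Ec in Hmax.
    assert (Hc' : 0 < l * sqrt I / 2) by nra.
    destruct (Req_dec (l * sqrt I / 2) cs) as [E|Hne].
    + rewrite <- E. field. lra.
    + pose proof (q_max cs Hcs HD _ Hc' Hne).
      assert (q cs <= q (l * sqrt I / 2)).
      { apply (Rmult_le_reg_l (8 / (PI * I))); auto. }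
      lra.
  - replace (2 * cs / sqrt I * sqrt I) with (2 * cs) by (field; lra).
    unfold c1, c2 in Hcs. apply Rabs_def1; lra.
  - rewrite alpha_val by auto. rewrite Ec. apply alpha_num; auto.
Qed.
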